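(* Let $G=\sum_{i=1}^h C_{2m_i}+\sum_{j=1}^k C_{2n_j+1}$ (disjoint union of cycles), where $h,k\ge0$, $h+k\ge1$, $m_i\ge2$ and $n_j\ge1$, and let $p=|V(G)|$. Then $str(G)=\max\{p+2,\ p+1+k\}$.
   Context: $C_n$ denotes the cycle on $n$ vertices and $+$ disjoint union (an empty sum is omitted). For a graph $G$ of order $p$, a numbering is a bijection $f:V(G)\to[1,p]$; $str_f(G)=\max\{f(u)+f(v): uv\in E(G)\}$ and $str(G)=\min_f str_f(G)$. *)

(* Defs.v *)
From mathcomp Require Import all_boot all_order.
Set Implicit Arguments. Unset Strict Implicit. Unset Printing Implicit Defensive.

(* A (simple) graph: a finite vertex type V with adjacency relation e. *)

(* A numbering f : V -> 'I_#|V| (injective, hence bijective); the label of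
   vertex x is (f x).+1, ranging over [1, #|V|]. *)
Definition numbering (V : finType) (f : {ffun V -> 'I_#|V|}) : bool :=
  injectiveb f.

Definition str_f (V : finType) (e : rel V) (f : {ffun V -> 'I_#|V|}) : nat :=
  \max_(u : V) \max_(v : V | e u v) ((f u).+1 + (f v).+1).

(* str(G) = min over numberings; the default 2*#|V| is never attained since
   numberings always exist and every str_f is < 2*#|V|. *)
Definition strength (V : finType) (e : rel V) : nat :=
  \big[minn/(2 * #|V|)]_(f : {ffun V -> 'I_#|V|} | numbering f) str_f e f.

(* Disjoint union of cycles C_(c 0) + ... + C_(c (N-1)):
   vertices are pairs (i, j) with j < c i; (i,a) ~ (i,b) iff b = a+1 mod c i
   or a = b+1 mod c i. *)
Definition cycles_vertex (N : nat) (c : 'I_N -> nat) : finType :=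
  {i : 'I_N & 'I_(c i)}.

Definition cycles_rel (N : nat) (c : 'I_N -> nat) : rel (cycles_vertex c) :=
  fun u v =>
    (tag u == tag v) &&
    ((val (tagged v) == (val (tagged u)).+1 %% c (tag u)) ||
     (val (tagged u) == (val (tagged v)).+1 %% c (tag u))).

Definition even_odd_lengths (h k : nat) (m : 'I_h -> nat) (n : 'I_k -> nat)
  (i : 'I_(h + k)) : nat :=
  match split i with
  | inl a => 2 * m a
  | inr b => (2 * n b).+1
  end.

Arguments cycles_rel {N} c.
Arguments cycles_vertex {N} c.
Arguments strength {V} e.

(* Main.v *)
Require Import Defs.
From mathcomp Require Import all_boot all_order.
From mathcomp Require Import zify.
Set Implicit Arguments. Unset Strict Implicit. Unset Printing Implicit Defensive.

Definition vsucc N (c : 'I_N -> nat) (x : cycles_vertex c) : cycles_vertex c :=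
  let: existT i j := x in existT _ i (ordS j).
Definition vpred N (c : 'I_N -> nat) (x : cycles_vertex c) : cycles_vertex c :=
  let: existT i j := x in existT _ i (ord_pred j).

Lemma vsuccK N (c : 'I_N -> nat) : cancel (@vsucc N c) (@vpred N c).
Proof. move=> x; change {i : 'I_N & 'I_(c i)} in x; by case: x=> i j /=; rewrite ordSK. Qed.
Lemma vpredK N (c : 'I_N -> nat) : cancel (@vpred N c) (@vsucc N c).
Proof. move=> x; change {i : 'I_N & 'I_(c i)} in x; by case: x=> i j /=; rewrite ord_predK. Qed.

Lemma rel_succ N (c : 'I_N -> nat) x : cycles_rel c x (vsucc x).
Proof. change {i : 'I_N & 'I_(c i)} in x; by case: x => i j; rewrite /cycles_rel /= !eqxx. Qed.

Lemma rel_pred N (c : 'I_N -> nat) x : cycles_rel c x (vpred x).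
Proof.
change {i : 'I_N & 'I_(c i)} in x; case: x => i j; rewrite /cycles_rel /= eqxx /=.
have := ord_predK j => /(congr1 val) /= ->. by rewrite eqxx orbT.
Qed.

Lemma rel_inv N (c : 'I_N -> nat) x y :
  cycles_rel c x y -> y = vsucc x \/ x = vsucc y.
Proof.
destruct x as [i j]; destruct y as [i' j']; rewrite /cycles_rel /=.
case/andP=> /eqP eii; subst i'; case/orP=> /eqP H.
  by left; congr existT; apply: val_inj.
by right; congr existT; apply: val_inj.
Qed.

Lemma card_cv N (c : 'I_N -> nat) : #|cycles_vertex c| = \sum_i c i.
Proof.
have -> : #|cycles_vertex c| = \sum_(x : cycles_vertex c) 1 by rewrite sum1_card.
have := (@sig_big_dep nat 0 addn 'I_N (fun i => 'I_(c i)) xpredT (fun _ => xpredT) (fun _ _ => 1)).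
move=> H.
transitivity (\sum_i \sum_(j : 'I_(c i)) 1).
  by rewrite H; apply: eq_bigl.
by apply: eq_bigr => /= i _; rewrite sum1_card card_ord.
Qed.

Lemma card_cv_set N (c : 'I_N -> nat) (B : {set cycles_vertex c}) :
  #|B| = \sum_i #|[set j : 'I_(c i) | existT _ i j \in B]|.
Proof.
have -> : #|B| = \sum_(x : cycles_vertex c) (if x \in B then 1 else 0).
  by rewrite -sum1_card big_mkcond.
have := (@sig_big_dep nat 0 addn 'I_N (fun i => 'I_(c i)) xpredT (fun _ => xpredT)
   (fun i j => if existT _ i j \in B then 1 else 0)).
move=> H.
transitivity (\sum_i \sum_(j : 'I_(c i)) (if existT _ i j \in B then 1 else 0)).
  rewrite H; apply: eq_big => // -[i j] //.
apply: eq_bigr => i _; rewrite -sum1_card big_mkcond /=.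
rewrite [RHS]big_mkcond; apply: eq_bigr => j _; by rewrite inE.
Qed.

Lemma cyc_union c (B : {set 'I_c}) : (forall j, j \in B -> ordS j \notin B) ->
  #|B :|: (@ord_pred c @: B)| = 2 * #|B|.
Proof.
move=> HB.
have := cardsUI B (@ord_pred c @: B).
have -> : B :&: (@ord_pred c @: B) = set0.
  apply/setP=> j; rewrite !inE; apply/andP; case=> jB /imsetP [j1 j1B ej].
  by move: (HB _ jB); rewrite ej ord_predK j1B.
rewrite cards0 addn0 card_imset; last exact: ord_pred_inj.
by move=> ->; rewrite mul2n addnn.
Qed.

Lemma cyc_count c (B : {set 'I_c}) : (forall j, j \in B -> ordS j \notin B) ->
  2 * #|B| <= c.
Proof.
move=> HB; rewrite -(cyc_union HB).
by rewrite -[X in _ <= X]card_ord max_card.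
Qed.

Lemma ord_pred_neq c (j : 'I_c) : 2 <= c -> ord_pred j != j.
Proof.
move=> c2; apply/eqP=> e.
have : ordS j = j by rewrite -{1}e ord_predK.
move/(congr1 val) => /=.
have jc := ltn_ord j.
case: (ltngtP j.+1 c) => H.
- by rewrite modn_small //; lia.
- lia.
- rewrite H modnn => j0. lia.
Qed.

Lemma cyc_count2 c (B : {set 'I_c}) j0 : (forall j, j \in B -> ordS j \notin B) ->
  2 <= c -> j0 \notin B -> ordS j0 \notin B -> ord_pred j0 \notin B ->
  2 * #|B| + 2 <= c.
Proof.
move=> HB c2 h1 h2 h3; rewrite -(cyc_union HB).
have sub : B :|: (@ord_pred c @: B) \subset ~: [set j0; ord_pred j0].
  apply/subsetP => j; rewrite !inE => /orP [] H.
    by apply/negP => /orP [] /eqP ej; move: H; rewrite ej; [rewrite (negbTE h1) | rewrite (negbTE h3)].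
  case/imsetP: H => j1 j1B ->.
  apply/negP => /orP [] /eqP ej.
    by move: h2; rewrite -ej ord_predK j1B.
  by move/ord_pred_inj: ej => ej; move: j1B; rewrite ej (negbTE h1).
have := subset_leq_card sub.
have := cardsC [set j0; ord_pred j0].
rewrite cards2 eq_sym (ord_pred_neq _ c2) card_ord.
lia.
Qed.

Lemma card_ord_lt n r : #|[set y : 'I_n | y < r]| <= r.
Proof.
case: (leqP n r) => [nr | rn].
  apply: leq_trans nr; rewrite -[X in _ <= X]card_ord; exact: max_card.
have sub : [set y : 'I_n | y < r] \subset (widen_ord (ltnW rn)) @: [set: 'I_r].
  apply/subsetP => y; rewrite inE => yr; apply/imsetP.
  by exists (Ordinal yr); rewrite ?inE //; apply: val_inj.
apply: leq_trans (subset_leq_card sub) _.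
by apply: leq_trans (leq_imset_card _ _) _; rewrite cardsT card_ord.
Qed.

Lemma ordS_pred_neq c (j : 'I_c) : 3 <= c -> ordS j != ord_pred j.
Proof.
move=> c3; apply/eqP => /(congr1 val) /=.
have jc := ltn_ord j.
case: j jc => j jc /= _.
case: (posnP j) => [j0|jp].
  subst j; rewrite add0n modn_small; last lia.
  case: (ltngtP 1 c) => H; [rewrite modn_small //; lia | lia | lia].
have -> : (j + c).-1 = j.-1 + c by lia.
rewrite modnDr (@modn_small j.-1); last lia.
case: (ltngtP j.+1 c) => H.
- rewrite modn_small //; lia.
- lia.
- rewrite H modnn; lia.
Qed.

Lemma str_edge (V : finType) (e : rel V) (f : {ffun V -> 'I_#|V|}) u v :
  e u v -> (f u).+1 + (f v).+1 <= str_f e f.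
Proof.
move=> euv; rewrite /str_f.
apply: leq_trans (@leq_bigmax_cond _ (e u) (fun v => (f u).+1 + (f v).+1) v euv) _.
exact: (@leq_bigmax _ (fun u => \max_(v | e u v) ((f u).+1 + (f v).+1)) u).
Qed.

Lemma str_le (V : finType) (e : rel V) (f : {ffun V -> 'I_#|V|}) :
  str_f e f <= 2 * #|V|.
Proof.
apply/bigmax_leqP => u _; apply/bigmax_leqP => v _.
have := ltn_ord (f u); have := ltn_ord (f v); lia.
Qed.

Lemma onto_num (V : finType) (f : {ffun V -> 'I_#|V|}) : numbering f ->
  forall y, exists x, f x = y.
Proof.
move=> /injectiveP injf y.
have : y \in codom f by apply: inj_card_onto => //; rewrite card_ord.
by case/codomP => x ->; exists x.
Qed.

Lemma lower1 N (c : 'I_N -> nat) (hc : forall i, 3 <= c i)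
  (f : {ffun cycles_vertex c -> 'I_#|cycles_vertex c|}) :
  numbering f -> 0 < #|cycles_vertex c| ->
  #|cycles_vertex c| + 2 <= str_f (cycles_rel c) f.
Proof.
move=> nf p0.
have /injectiveP injf := nf.
have pp : #|cycles_vertex c|.-1 < #|cycles_vertex c| by rewrite ltn_predL.
have [u fu] := onto_num nf (Ordinal pp).
have E1 := str_edge f (rel_succ u).
have E2 := str_edge f (rel_pred u).
have ne : vsucc u != vpred u.
  destruct u as [i j]; rewrite /=.
  by rewrite eq_Tagged /= ordS_pred_neq.
have : f (vsucc u) != f (vpred u) by rewrite (inj_eq injf).
rewrite -val_eqE /= fu /= in E1 E2 * => H.
move: E1 E2 H; lia.
Qed.

Lemma lower2 N (c : 'I_N -> nat) (hc : forall i, 3 <= c i)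
  (f : {ffun cycles_vertex c -> 'I_#|cycles_vertex c|}) :
  numbering f -> 0 < #|cycles_vertex c| ->
  #|cycles_vertex c| + 1 + \sum_i odd (c i) <= str_f (cycles_rel c) f.
Proof.
move=> nf p0.
have /injectiveP injf := nf.
have s2 := lower1 hc nf p0.
have sle := str_le (cycles_rel c) f.
set p := #|cycles_vertex c| in s2 sle p0 *.
set s := str_f (cycles_rel c) f in s2 sle *.
set q := s %/ 2.
have sq : s = 2 * q + s %% 2 by rewrite /q; lia.
set B := [set x | q < (f x).+1].
have indep : forall x, x \in B -> vsucc x \notin B.
  move=> x; rewrite !inE => H1; apply/negP => H2.
  have := str_edge f (rel_succ x); rewrite -/s; lia.
have cardS : #|~: B| <= q.
  have sub : f @: (~: B) \subset [set y : 'I_p | y < q].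
    apply/subsetP => y /imsetP [x]; rewrite !inE -leqNgt => H ->; exact: H.
  have := subset_leq_card sub; rewrite card_imset //.
  move=> H; apply: leq_trans H _; exact: card_ord_lt.
have cB := cardsC B.
set Bi := fun i => [set j : 'I_(c i) | existT _ i j \in B].
have indepi : forall i j, j \in Bi i -> ordS j \notin Bi i.
  move=> i j; rewrite /Bi !inE; have := indep (existT _ i j); rewrite !inE; exact.
have memBi : forall i j, (j \in Bi i) = (existT _ i j \in B).
  by move=> i j; rewrite /Bi !inE.
have qp : q.-1 < p by rewrite /q; lia.
have [M fM] := onto_num nf (Ordinal qp).
have fMv : (f M).+1 = q by rewrite fM /=; lia.
have EM1 := str_edge f (rel_succ M).
have EM2 := str_edge f (rel_pred M).
rewrite -/s in EM1 EM2.
have percyc : forall i, 2 * #|Bi i| + odd (c i) + (~~ odd s && (i == tag M)) <= c i.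
  move=> i; have h1 := cyc_count (indepi i).
  have hoc : odd (c i) -> 2 * #|Bi i| + 1 <= c i.
    move=> oc; have := modn2 (c i); rewrite oc /= => H2; set x := #|Bi i| in h1 *; lia.
  case: (boolP (~~ odd s && (i == tag M))) => [/andP [es /eqP ei] | _].
    have es' : s %% 2 = 0 by rewrite modn2; move: es; case: (odd s).
    have m1 : M \notin B by rewrite inE -leqNgt fMv.
    have m2 : vsucc M \notin B by rewrite inE -leqNgt; lia.
    have m3 : vpred M \notin B by rewrite inE -leqNgt; lia.
    subst i; destruct M as [i0 j0].
    have h3 := @cyc_count2 _ (Bi i0) j0 (indepi i0) (ltnW (hc i0)).
    have : 2 * #|Bi i0| + 2 <= c i0.
      by apply: h3; rewrite memBi.
    move=> H; rewrite /=; apply: leq_trans _ H; rewrite -addnA leq_add2l; by case: (odd _).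
  rewrite /= addn0; case E: (odd _); [exact: hoc E | rewrite /= addn0; exact: h1].
have sum : \sum_i (2 * #|Bi i| + odd (c i) + (~~ odd s && (i == tag M))) <= \sum_i c i.
  by apply: leq_sum => i _; exact: percyc.
rewrite -(card_cv c) -/p !big_split /= big1_eq in sum.
have cb : \sum_i #|Bi i| = #|B| by rewrite (card_cv_set B).
rewrite cb in sum.
have Ed : \sum_i (~~ odd s && (i == tag M)) = ~~ odd s.
  rewrite (bigD1 (tag M)) //= eqxx andbT big1 ?addn0 // => i /negbTE ->.
  by rewrite andbF.
rewrite Ed in sum.
rewrite -/p in cB.
set K := \sum_i odd (c i) in sum *.
have := modn2 s.
move: sum cB cardS sq; move: (#|B|) (#|~: B|) => b b2; clear.
case: (odd s) => /=; lia.
Qed.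

Definition Sb N (c : 'I_N -> nat) (F : nat -> nat) (t : nat) :=
  \sum_(i0 < N | i0 < t) F (c i0).

Lemma Sb_step N (c : 'I_N -> nat) F (i : 'I_N) : Sb c F i + F (c i) = Sb c F i.+1.
Proof.
rewrite /Sb [in RHS](bigD1 i) //= addnC; congr addn.
apply: eq_bigl => i0; rewrite ltnS ltn_neqAle andbC; congr andb.
Qed.

Lemma Sb_mono N (c : 'I_N -> nat) F t t' : t <= t' -> Sb c F t <= Sb c F t'.
Proof.
move=> tt; rewrite /Sb [X in X <= _]big_mkcond [X in _ <= X]big_mkcond /=.
apply: leq_sum => i0 _; case: ifP => H //; rewrite ifT //; lia.
Qed.

Lemma Sb_N N (c : 'I_N -> nat) F : Sb c F N = \sum_i F (c i).
Proof. by rewrite /Sb; apply: eq_bigl => i; rewrite ltn_ord. Qed.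

Lemma Sb_add N (c : 'I_N -> nat) F G t : Sb c (fun x => F x + G x) t = Sb c F t + Sb c G t.
Proof. by rewrite /Sb big_split. Qed.

Lemma Sb_lt N (c : 'I_N -> nat) F (i : 'I_N) j : j < F (c i) -> Sb c F i + j < Sb c F N.
Proof.
move=> H; have := Sb_step c F i; have := Sb_mono c F (ltn_ord i); lia.
Qed.

Lemma Sb_inj N (c : 'I_N -> nat) F (i i' : 'I_N) j j' : j < F (c i) -> j' < F (c i') ->
  Sb c F i + j = Sb c F i' + j' -> i = i' /\ j = j'.
Proof.
move=> H H' E.
case: (ltngtP i i') => ii.
- have := Sb_step c F i; have := Sb_mono c F ii; lia.
- have := Sb_step c F i'; have := Sb_mono c F ii; lia.
- have e : i = i' by apply: val_inj.
  by subst i'; split => //; lia.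
Qed.

Definition upf (x : nat) := (x + 1) %/ 2.
Definition lof (x : nat) := x %/ 2.
Definition odf (x : nat) := x %% 2.

Definition glab N (c : 'I_N -> nat) (x : cycles_vertex c) : nat :=
  let: existT i j := x in
  if odd j then (Sb c upf N + Sb c lof N).-1 - (Sb c lof i + j %/ 2)
  else Sb c upf i + j %/ 2.

Lemma card_AB N (c : 'I_N -> nat) : #|cycles_vertex c| = Sb c upf N + Sb c lof N.
Proof.
rewrite card_cv -Sb_add Sb_N; apply: eq_bigr => i _; rewrite /upf /lof; lia.
Qed.

Lemma AB_odd N (c : 'I_N -> nat) t : Sb c upf t = Sb c lof t + Sb c odf t.
Proof.
rewrite -Sb_add /Sb; apply: eq_bigr => i _; rewrite /upf /lof /odf; lia.
Qed.

Lemma glab_lt N (c : 'I_N -> nat) (x : cycles_vertex c) : glab x < Sb c upf N + Sb c lof N.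
Proof.
case: x => i j /=.
have jc := ltn_ord j.
case: ifP => oj.
- have : j %/ 2 < lof (c i).
    by have := modn2 j; rewrite oj /lof /= => ?; lia.
  move/Sb_lt; lia.
- have : j %/ 2 < upf (c i).
    by have := modn2 j; rewrite oj /upf /= => ?; lia.
  move/Sb_lt; lia.
Qed.

Lemma glab_inj N (c : 'I_N -> nat) : injective (@glab N c).
Proof.
move=> x y; have := glab_lt x; have := glab_lt y.
case: x => i j; case: y => i' j' /=.
have jc := ltn_ord j; have jc' := ltn_ord j'.
have Hlo : forall i (j : 'I_(c i)), odd j -> j %/ 2 < lof (c i).
  move=> i0 j0 oj; have := ltn_ord j0; have := modn2 j0; rewrite oj /lof /= => ?; lia.
have Hup : forall i (j : 'I_(c i)), ~~ odd j -> j %/ 2 < upf (c i).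
  move=> i0 j0 oj; have := ltn_ord j0; have := modn2 j0; rewrite (negbTE oj) /upf /= => ?; lia.
have fin : forall i0 i1 (j0 : 'I_(c i0)) (j1 : 'I_(c i1)), i0 = i1 -> val j0 = val j1 ->
    existT (fun i => 'I_(c i)) i0 j0 = existT _ i1 j1.
  by move=> i0 i1 j0 j1 e; subst i1 => e; congr existT; apply: val_inj.
have pj : forall (a b : nat), odd a = odd b -> a %/ 2 = b %/ 2 -> a = b.
  move=> a b e1 e2; have := modn2 a; have := modn2 b; rewrite e1; case: (odd b) => /=; lia.
case: ifP => oj'; case: ifP => oj /= l1 l2 E.
- have h := Hlo _ _ oj; have h' := Hlo _ _ oj'.
  have L := Sb_lt h; have L' := Sb_lt h'.
  have E' : Sb c lof i + j %/ 2 = Sb c lof i' + j' %/ 2 by lia.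
  have [e1 e2] := Sb_inj h h' E'.
  by apply: fin => //; apply: pj; rewrite ?oj ?oj'.
- have h := Hup _ _ (negbT oj); have h' := Hlo _ _ oj'.
  have L := Sb_lt h; have L' := Sb_lt h'; lia.
- have h := Hlo _ _ oj; have h' := Hup _ _ (negbT oj').
  have L := Sb_lt h; have L' := Sb_lt h'; lia.
- have h := Hup _ _ (negbT oj); have h' := Hup _ _ (negbT oj').
  have [e1 e2] := Sb_inj h h' E.
  by apply: fin => //; apply: pj; rewrite ?oj ?oj'.
Qed.

Lemma glab_edge N (c : 'I_N -> nat) (hc : forall i, 3 <= c i) s
  (Hs1 : forall i : 'I_N, Sb c upf N + Sb c lof N + 2 + Sb c odf i <= s)
  (Hs2 : Sb c upf N + Sb c lof N + Sb c odf N <= s + 1) (x : cycles_vertex c) :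
  (glab x).+1 + (glab (vsucc x)).+1 <= s.
Proof.
case: x => i j /=.
have jc := ltn_ord j.
have H1 := Hs1 i; have H2 := Hs2; have ci := hc i.
have ab := AB_odd c i; have abN := AB_odd c N.
have st := Sb_step c upf i; have mo := Sb_mono c upf (ltn_ord i).
have slo : odd j -> Sb c lof i + j %/ 2 < Sb c lof N.
  move=> oj; apply: Sb_lt; have := modn2 j; rewrite oj /lof /= => ?; lia.
have m2 := modn2 j.
case: (ltnP j.+1 (c i)) => H.
- rewrite (modn_small H) /=.
  case: (odd j) slo m2 => /= slo m2.
  + have := slo isT; lia.
  + have : Sb c lof i + j.+1 %/ 2 < Sb c lof N.
      by apply: Sb_lt; rewrite /lof; lia.
    lia.
- have ec : j.+1 = c i by lia.
  have E0 : j.+1 %% c i = 0 by rewrite {1}ec modnn.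
  rewrite E0.
  rewrite /=.
  case: (odd j) slo m2 => /= slo m2.
  + have := slo isT; lia.
  + have : upf (c i) = j %/ 2 + 1 by rewrite /upf; lia.
    lia.
Qed.

Lemma upper N (c : 'I_N -> nat) (hc : forall i, 3 <= c i) s
  (Hs1 : forall i : 'I_N, Sb c upf N + Sb c lof N + 2 + Sb c odf i <= s)
  (Hs2 : Sb c upf N + Sb c lof N + Sb c odf N <= s + 1) :
  exists f : {ffun cycles_vertex c -> 'I_#|cycles_vertex c|},
    numbering f /\ str_f (cycles_rel c) f <= s.
Proof.
have gl : forall x : cycles_vertex c, glab x < #|cycles_vertex c|.
  by move=> x; rewrite card_AB; exact: glab_lt.
exists [ffun x => Ordinal (gl x)]; split.
  apply/injectiveP => x y; rewrite !ffunE => /(congr1 val) /=; exact: glab_inj.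
apply/bigmax_leqP => u _; apply/bigmax_leqP => v euv; rewrite !ffunE /=.
case: (rel_inv euv) => ->; first exact: glab_edge.
by rewrite addnC; exact: glab_edge.
Qed.

Lemma eol_info (h k : nat) (m : 'I_h -> nat) (n : 'I_k -> nat)
  (hm : forall i, 2 <= m i) (hn : forall j, 1 <= n j) (i : 'I_(h + k)) :
  3 <= even_odd_lengths m n i /\ odd (even_odd_lengths m n i) = (h <= i).
Proof.
rewrite /even_odd_lengths; case: fintype.splitP => [j ej | j ej].
  have := hm j; rewrite ej oddM /= (leqNgt h) ltn_ord /=; split => //; lia.
have := hn j; rewrite ej oddS oddM /=; split; [lia | rewrite leq_addr //].
Qed.

Lemma Sb_odd_le (h k : nat) (m : 'I_h -> nat) (n : 'I_k -> nat)
  (hm : forall i, 2 <= m i) (hn : forall j, 1 <= n j) t :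
  Sb (even_odd_lengths m n) odf t <= t - h.
Proof.
rewrite /Sb.
have -> : \sum_(i0 < h + k | i0 < t) odf (even_odd_lengths m n i0)
        = \sum_(i0 < h + k | i0 < t) (h <= i0).
  apply: eq_bigr => i _; rewrite /odf modn2; by case: (eol_info hm hn i) => _ ->.
rewrite big_split_ord /= big1; last by move=> i _; rewrite leqNgt ltn_ord.
rewrite add0n.
have -> : \sum_(i < k | h + i < t) (h <= h + i) = \sum_(i < k | i < t - h) 1.
  by apply: eq_big => [i|i _]; [lia | rewrite leq_addr].
rewrite sum1_card.
have := card_ord_lt k (t - h).
by rewrite cardsE.
Qed.

Lemma bigmin_le_seq (I : eqType) (r : seq I) (P : pred I) (F : I -> nat) x i0 :
  i0 \in r -> P i0 -> \big[minn/x]_(i <- r | P i) F i <= F i0.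
Proof.
elim: r => [//|a r IH]; rewrite inE big_cons => /orP [/eqP <- ->|H Pi].
  exact: geq_minl.
case: ifP => _; last exact: IH.
by rewrite geq_min IH ?orbT.
Qed.

Lemma bigmin_le (I : finType) (P : pred I) (F : I -> nat) x i0 :
  P i0 -> \big[minn/x]_(i | P i) F i <= F i0.
Proof. by apply: bigmin_le_seq; rewrite mem_index_enum. Qed.

Theorem mainTheorem13 (h k : nat) (m : 'I_h -> nat) (n : 'I_k -> nat) :
  0 < h + k ->
  (forall i, 2 <= m i) ->
  (forall j, 1 <= n j) ->
  let c := even_odd_lengths m n in
  let p := #|cycles_vertex c| in
  strength (cycles_rel c) = maxn (p + 2) (p + 1 + k).
Proof.
move=> hk hm hn c p.
have hc : forall i, 3 <= c i by move=> i; case: (eol_info hm hn i).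
have Kk : \sum_i odd (c i) = k.
  transitivity (\sum_(i < h + k) (h <= i)).
    by apply: eq_bigr => i _; case: (eol_info hm hn i) => _ ->.
  rewrite big_split_ord /= big1; last by move=> i _; rewrite leqNgt ltn_ord.
  rewrite add0n (eq_bigr (fun _ => 1)); last by move=> i _; rewrite leq_addr.
  by rewrite sum1_card card_ord.
have p0 : 0 < p.
  rewrite /p card_cv (bigD1 (Ordinal hk)) //=; have := hc (Ordinal hk); lia.
have pAB : p = Sb c upf (h + k) + Sb c lof (h + k) by rewrite /p card_AB.
have SN : Sb c odf (h + k) = k.
  rewrite Sb_N; transitivity (\sum_i odd (c i)); last exact: Kk.
  by apply: eq_bigr => i _; rewrite /odf modn2.
set s := maxn (p + 2) (p + 1 + k).
have [f0 [nf0 sf0]] : exists f : {ffun cycles_vertex c -> 'I_#|cycles_vertex c|},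
    numbering f /\ str_f (cycles_rel c) f <= s.
  apply: upper => //.
    move=> i; rewrite -pAB.
    have := Sb_odd_le hm hn i; rewrite -/c; have := ltn_ord i; rewrite /s; lia.
  by rewrite -pAB SN /s; lia.
have low : forall f : {ffun cycles_vertex c -> 'I_#|cycles_vertex c|},
    numbering f -> s <= str_f (cycles_rel c) f.
  move=> f nf; have := lower1 hc nf p0; have := lower2 hc nf p0.
  rewrite Kk -/p /s; lia.
apply/eqP; rewrite eqn_leq; apply/andP; split.
  rewrite /strength; exact: leq_trans (bigmin_le _ _ nf0) sf0.
rewrite /strength.
elim/big_ind: _.
- have := low f0 nf0; have := str_le (cycles_rel c) f0; rewrite -/p; lia.
- by move=> x y hx hy; rewrite leq_min hx hy.
- exact: low.
Qed.
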